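(* Let $r\ge 2$ and $m$ be integers with $0\le 2m\le r$, $n=2r-4m$, and let $f:S^2(S^r(\mathbb{C}^2))\to S^{n}(\mathbb{C}^2)$ be an $\mathfrak{sl}_2(\mathbb{C})$-equivariant linear map, written $f=\sum_{k=0}^n q_k w_k$, each $q_k$ viewed as a symmetric bilinear form on $S^r(\mathbb{C}^2)$. Then for every $0\le k\le n/2$, $$\mathrm{rk}(q_k)=\mathrm{rk}(q_{n-k})\le 2m+k+1.$$
   Context: $\mathfrak{sl}_2(\mathbb{C})$ has basis $X=\begin{pmatrix}0&1\\0&0\end{pmatrix}$, $H=\begin{pmatrix}1&0\\0&-1\end{pmatrix}$, $Y=\begin{pmatrix}0&0\\1&0\end{pmatrix}$, acting on the irreducible modules $S^d(\mathbb{C}^2)$. Let $w_0\in S^n(\mathbb{C}^2)$ be a highest weight vector and $w_k=Y^kw_0/k!$ ($0\le k\le n$). Writing $f=\sum_{k=0}^n q_kw_k$ means $f(u)=\sum_k q_k(u)w_k$ for linear forms $q_k$ on $S^2(S^r(\mathbb{C}^2))$, equivalently symmetric bilinear forms $(u,v)\mapsto q_k(uv)$ on $S^r(\mathbb{C}^2)$; $\mathrm{rk}$ denotes the rank of the bilinear form. *)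

(* Defs.v *)
From HB Require Import structures.
From mathcomp Require Import all_boot all_order all_algebra.
Set Implicit Arguments. Unset Strict Implicit. Unset Printing Implicit Defensive.
Import Order.TTheory GRing.Theory Num.Theory.
Local Open Scope ring_scope.

(* The irreducible sl_2-module S^d(C^2), in the monomial basis
   e_i = x^(d-i) y^i  (i = 0..d), vectors as column vectors 'cV_(d.+1).
   X = x d/dy :  X e_i = i e_(i-1)
   Y = y d/dx :  Y e_i = (d-i) e_(i+1)
   H = x d/dx - y d/dy :  H e_i = (d - 2i) e_i                            *)
Section Sl2.
Variable F : numClosedFieldType.

Definition sl2X (d : nat) : 'M[F]_(d.+1) :=
  \matrix_(i, j) (if j == i.+1 :> nat then (j : nat)%:R else 0).
Definition sl2Y (d : nat) : 'M[F]_(d.+1) :=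
  \matrix_(i, j) (if i == j.+1 :> nat then (d - j)%:R else 0).
Definition sl2H (d : nat) : 'M[F]_(d.+1) :=
  \matrix_(i, j) (if i == j then (d%:R - (2 * i)%:R) else 0).

(* A bilinear map S^r x S^r -> S^n given by coordinate Gram matrices:
   (bilin T u v)_l = u^T (T l) v.  It is symmetric (hence a linear map
   on S^2(S^r)) iff every T l is symmetric. *)
Definition bilin (r n : nat) (T : 'I_n.+1 -> 'M[F]_(r.+1))
  (u v : 'cV[F]_(r.+1)) : 'cV[F]_(n.+1) :=
  \col_l (u^T *m T l *m v) 0 0.

(* sl_2-equivariance of the induced linear map f : S^2(S^r) -> S^n,
   f(uv) = bilin T u v, where Z.(uv) = (Z u) v + u (Z v). *)
Definition equivariant (r n : nat) (T : 'I_n.+1 -> 'M[F]_(r.+1)) : Prop :=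
  (forall l, (T l)^T = T l) /\
  forall u v,
    [/\ sl2X n *m bilin T u v = bilin T (sl2X r *m u) v + bilin T u (sl2X r *m v),
        sl2H n *m bilin T u v = bilin T (sl2H r *m u) v + bilin T u (sl2H r *m v) &
        sl2Y n *m bilin T u v = bilin T (sl2Y r *m u) v + bilin T u (sl2Y r *m v)].

Definition wvec (n : nat) (w0 : 'cV[F]_(n.+1)) (k : nat) : 'cV[F]_(n.+1) :=
  (k`!%:R)^-1 *: (sl2Y n ^+ k *m w0).

End Sl2.

(* Main.v *)
Require Import Defs.
From HB Require Import structures.
From mathcomp Require Import all_boot all_order all_algebra.
From mathcomp Require Import zify ring.
Import Order.TTheory GRing.Theory Num.Theory.
Local Open Scope ring_scope.
Set Implicit Arguments. Unset Strict Implicit.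

Definition tt (F : numClosedFieldType) (r n : nat) (T : 'I_n.+1 -> 'M[F]_(r.+1))
  (l i j : nat) : F :=
  if [&& (l <= n)%N, (i <= r)%N & (j <= r)%N] then T (inord l) (inord i) (inord j) else 0.



Lemma ttE (F : numClosedFieldType) (r n : nat) (T : 'I_n.+1 -> 'M[F]_(r.+1))
  (l : 'I_n.+1) (i j : 'I_r.+1) : tt T l i j = T l i j.
Proof. by rewrite /tt (leq_ord l) (leq_ord i) (leq_ord j) !inord_val. Qed.

Lemma tt_out (F : numClosedFieldType) (r n : nat) (T : 'I_n.+1 -> 'M[F]_(r.+1))
  (l i j : nat) : ~~ [&& (l <= n)%N, (i <= r)%N & (j <= r)%N] -> tt T l i j = 0.
Proof. by rewrite /tt => /negbTE ->. Qed.

Lemma sum_eq1 (F : numClosedFieldType) (N k : nat) (f : nat -> F) :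
  \sum_(p < N.+1) (if (p : nat) == k then f p else 0) = if (k <= N)%N then f k else 0.
Proof.
case: ifP => hk.
  rewrite (bigD1 (inord k)) //= inordK // eqxx big1 ?addr0 // => p hp.
  case: eqP => // hpk; case/eqP: hp; apply: val_inj; by rewrite /= inordK.
apply: big1 => p _; case: eqP => // hpk.
by move: (ltn_ord p); rewrite hpk ltnS hk.
Qed.

Lemma sum_eqS (F : numClosedFieldType) (N k : nat) (f : nat -> F) :
  \sum_(p < N.+1) (if k == (p : nat).+1 then f p else 0) =
  if k is k'.+1 then (if (k' <= N)%N then f k' else 0) else 0.
Proof.
case: k => [|k]; first by rewrite big1.
rewrite -sum_eq1; apply: eq_bigr => p _; by rewrite eqSS eq_sym.
Qed.

Lemma bilin_dd (F : numClosedFieldType) (r n : nat) (T : 'I_n.+1 -> 'M[F]_(r.+1))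
  (i j : 'I_r.+1) l : bilin T (delta_mx i 0) (delta_mx j 0) l 0 = T l i j.
Proof. by rewrite mxE trmx_delta -rowE -colE !mxE. Qed.

Lemma bilin_dr (F : numClosedFieldType) (r n : nat) (T : 'I_n.+1 -> 'M[F]_(r.+1))
  (M : 'M[F]_(r.+1)) (i j : 'I_r.+1) l :
  bilin T (M *m delta_mx i 0) (delta_mx j 0) l 0 = \sum_a M a i * T l a j.
Proof.
rewrite mxE -!colE !mxE; apply: eq_bigr => a _; by rewrite !mxE.
Qed.

Lemma bilin_dl (F : numClosedFieldType) (r n : nat) (T : 'I_n.+1 -> 'M[F]_(r.+1))
  (M : 'M[F]_(r.+1)) (i j : 'I_r.+1) l :
  bilin T (delta_mx i 0) (M *m delta_mx j 0) l 0 = \sum_b T l i b * M b j.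
Proof.
rewrite mxE trmx_delta -rowE -colE !mxE; apply: eq_bigr => a _; by rewrite !mxE.
Qed.


Lemma sA (F : numClosedFieldType) (N k : nat) (a b : nat -> F) :
  \sum_(p < N.+1) (if (p : nat) == k then a p else 0) * b p = if (k <= N)%N then a k * b k else 0.
Proof.
rewrite -(@sum_eq1 _ N k (fun p => a p * b p)); apply: eq_bigr => p _; by case: ifP; rewrite ?mul0r.
Qed.
Lemma sB (F : numClosedFieldType) (N k : nat) (a b : nat -> F) :
  \sum_(p < N.+1) (if k == (p : nat).+1 then a p else 0) * b p =
  if k is k'.+1 then (if (k' <= N)%N then a k' * b k' else 0) else 0.
Proof.
rewrite -(@sum_eqS _ N k (fun p => a p * b p)); apply: eq_bigr => p _; by case: ifP; rewrite ?mul0r.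
Qed.
Lemma sC (F : numClosedFieldType) (N k : nat) (a b : nat -> F) :
  \sum_(p < N.+1) b p * (if (p : nat) == k then a p else 0) = if (k <= N)%N then a k * b k else 0.
Proof.
rewrite -(@sum_eq1 _ N k (fun p => a p * b p)); apply: eq_bigr => p _; by case: ifP; rewrite ?mulr0 // mulrC.
Qed.
Lemma sD (F : numClosedFieldType) (N k : nat) (a b : nat -> F) :
  \sum_(p < N.+1) b p * (if k == (p : nat).+1 then a p else 0) =
  if k is k'.+1 then (if (k' <= N)%N then a k' * b k' else 0) else 0.
Proof.
rewrite -(@sum_eqS _ N k (fun p => a p * b p)); apply: eq_bigr => p _; by case: ifP; rewrite ?mulr0 // mulrC.
Qed.

Lemma eqX (F : numClosedFieldType) (r n : nat) (T : 'I_n.+1 -> 'M[F]_(r.+1))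
  (hT : equivariant T) (l i j : nat) : (l <= n)%N -> (i <= r)%N -> (j <= r)%N ->
  (l.+1)%:R * tt T l.+1 i j = i%:R * tt T l i.-1 j + j%:R * tt T l i j.-1.
Proof.
move=> hl hi hj.
have := (hT.2 (delta_mx (inord i) 0) (delta_mx (inord j) 0)) => -[hx _ _].
move/matrixP/(_ (inord l) 0): hx.
rewrite [RHS]mxE bilin_dr bilin_dl mxE.
under eq_bigr do rewrite bilin_dd -ttE !inordK ?ltnS // mxE inordK ?ltnS //.
under [X in _ = X + _]eq_bigr do rewrite -ttE !inordK ?ltnS // mxE inordK ?ltnS //.
under [X in _ = _ + X]eq_bigr do rewrite -ttE !inordK ?ltnS // mxE inordK ?ltnS //.
rewrite (@sA _ n l.+1 (fun p => p%:R) (fun p => tt T p i j)).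
rewrite (@sB _ r i (fun _ => i%:R) (fun p => tt T l p j)).
rewrite (@sD _ r j (fun _ => j%:R) (fun p => tt T l i p)).
have -> : (if i is k'.+1 then (if (k' <= r)%N then i%:R * tt T l k' j else 0) else 0)
   = i%:R * tt T l i.-1 j.
  by case: i hi => [|i] hi //=; rewrite ?mul0r // ltnW.
have -> : (if j is k'.+1 then (if (k' <= r)%N then j%:R * tt T l i k' else 0) else 0)
   = j%:R * tt T l i j.-1.
  by case: j hj => [|j] hj //=; rewrite ?mul0r // ltnW.
case: ifP => hln // <-.
by rewrite tt_out ?mulr0 // hln.
Qed.

Lemma eqY (F : numClosedFieldType) (r n : nat) (T : 'I_n.+1 -> 'M[F]_(r.+1))
  (hT : equivariant T) (l i j : nat) : (l <= n)%N -> (i <= r)%N -> (j <= r)%N ->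
  (if l is l'.+1 then (n - l')%:R * tt T l' i j else 0) =
  (r - i)%:R * tt T l i.+1 j + (r - j)%:R * tt T l i j.+1.
Proof.
move=> hl hi hj.
have := (hT.2 (delta_mx (inord i) 0) (delta_mx (inord j) 0)) => -[_ _ hy].
move/matrixP/(_ (inord l) 0): hy.
rewrite [RHS]mxE bilin_dr bilin_dl mxE.
under eq_bigr do rewrite bilin_dd -ttE !inordK ?ltnS // mxE inordK ?ltnS //.
under [X in _ = X + _]eq_bigr do rewrite -ttE !inordK ?ltnS // mxE inordK ?ltnS //.
under [X in _ = _ + X]eq_bigr do rewrite -ttE !inordK ?ltnS // mxE inordK ?ltnS //.
rewrite (@sB _ n l (fun p => (n - p)%:R) (fun p => tt T p i j)).
rewrite (@sA _ r i.+1 (fun _ => (r - i)%:R) (fun p => tt T l p j)).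
rewrite (@sC _ r j.+1 (fun _ => (r - j)%:R) (fun p => tt T l i p)).
have -> : (if l is k'.+1 then (if (k' <= n)%N then (n - k')%:R * tt T k' i j else 0) else 0)
   = (if l is l'.+1 then (n - l')%:R * tt T l' i j else 0).
  by case: l hl => [|l] hl //=; rewrite ltnW.
move=> ->; congr (_ + _).
  by case: ifP => // h; rewrite tt_out ?mulr0 //= h andbF.
by case: ifP => // h; rewrite tt_out ?mulr0 //= h !andbF.
Qed.

Lemma eqH (F : numClosedFieldType) (r n : nat) (T : 'I_n.+1 -> 'M[F]_(r.+1))
  (hT : equivariant T) (l i j : nat) : (l <= n)%N -> (i <= r)%N -> (j <= r)%N ->
  (n%:R - (2 * l)%:R) * tt T l i j =
  (r%:R - (2 * i)%:R) * tt T l i j + (r%:R - (2 * j)%:R) * tt T l i j.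
Proof.
move=> hl hi hj.
have := (hT.2 (delta_mx (inord i) 0) (delta_mx (inord j) 0)) => -[_ hh _].
move/matrixP/(_ (inord l) 0): hh.
rewrite [RHS]mxE bilin_dr bilin_dl mxE.
under eq_bigr do rewrite bilin_dd -ttE !inordK ?ltnS // mxE -val_eqE /= inordK ?ltnS // eq_sym.
under [X in _ = X + _]eq_bigr do rewrite -ttE !inordK ?ltnS // mxE -val_eqE /= inordK ?ltnS //.
under [X in _ = _ + X]eq_bigr do rewrite -ttE !inordK ?ltnS // mxE -val_eqE /= inordK ?ltnS //.
rewrite (@sA _ n l (fun _ => n%:R - (2 * l)%:R) (fun p => tt T p i j)).
rewrite (@sA _ r i (fun p => r%:R - (2 * p)%:R) (fun p => tt T l p j)).
rewrite (@sC _ r j (fun p => r%:R - (2 * p)%:R) (fun p => tt T l i p)).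
by rewrite hl hi hj.
Qed.


Lemma supp (F : numClosedFieldType) (r m n : nat) (T : 'I_n.+1 -> 'M[F]_(r.+1))
  (hT : equivariant T) (hm : (2 * m <= r)%N) (hn : n = (2 * r - 4 * m)%N) (l i j : nat) :
  tt T l i j != 0 -> [/\ (l <= n)%N, (i <= r)%N, (j <= r)%N & (i + j = 2 * m + l)%N].
Proof.
move=> h.
have hb : [&& (l <= n)%N, (i <= r)%N & (j <= r)%N].
  by apply/negP => /negP hb; move: h; rewrite tt_out ?eqxx.
case/and3P: (hb) => hl hi hj; split=> //.
have := eqH hT hl hi hj => e.
have : ((n + 2 * i + 2 * j)%:R == (2 * l + r + r)%:R :> F).
  have : (n%:R - (2 * l)%:R - ((r%:R - (2 * i)%:R) + (r%:R - (2 * j)%:R))) * tt T l i j == 0 :> F.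
    by apply/eqP; rewrite mulrBl e; ring.
  rewrite mulf_eq0 (negbTE h) orbF => /eqP e2.
  rewrite -subr_eq0; apply/eqP; rewrite -[RHS]e2 !natrD; ring.
rewrite eqr_nat => /eqP; lia.
Qed.


Definition fam (F : numClosedFieldType) (r m n : nat) (g : nat -> nat -> nat -> F) : Prop :=
 [/\ (forall l i j, g l i j != 0 -> [/\ (l <= n)%N, (i <= r)%N, (j <= r)%N & (i + j = 2 * m + l)%N]),
     (forall l i j, (l < n)%N -> (i <= r)%N -> (j <= r)%N ->
        l.+1%:R * g l.+1 i j = i%:R * g l i.-1 j + j%:R * g l i j.-1) &
     (forall i j, (i <= r)%N -> (j <= r)%N -> (i + j).+1 = (2 * m)%N ->
        (r - i)%:R * g 0%N i.+1 j + (r - j)%:R * g 0%N i j.+1 = 0)].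

Lemma fam_lin (F : numClosedFieldType) (r m n : nat) (g h : nat -> nat -> nat -> F) (a b : F) :
  fam r m n g -> fam r m n h -> fam r m n (fun l i j => a * g l i j - b * h l i j).
Proof.
case=> Sg Xg Yg [Sh Xh Yh]; split.
- move=> l i j hne.
  case: (eqVneq (g l i j) 0) => hg; last exact: Sg.
  case: (eqVneq (h l i j) 0) => hh; last exact: Sh.
  by move: hne; rewrite hg hh !mulr0 subrr eqxx.
- move=> l i j hl hi hj.
  apply/eqP; rewrite -subr_eq0; apply/eqP.
  transitivity (a * (l.+1%:R * g l.+1 i j - (i%:R * g l i.-1 j + j%:R * g l i j.-1))
              - b * (l.+1%:R * h l.+1 i j - (i%:R * h l i.-1 j + j%:R * h l i j.-1))); first ring.
  by rewrite Xg // Xh // !subrr !mulr0 subrr.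
- move=> i j hi hj hij.
  transitivity (a * ((r - i)%:R * g 0%N i.+1 j + (r - j)%:R * g 0%N i j.+1)
              - b * ((r - i)%:R * h 0%N i.+1 j + (r - j)%:R * h 0%N i j.+1)); first ring.
  by rewrite Yg // Yh // !mulr0 subrr.
Qed.

Lemma fam_zero (F : numClosedFieldType) (r m n : nat) (g : nat -> nat -> nat -> F) :
  (2 * m <= r)%N -> fam r m n g -> g 0%N 0%N (2 * m)%N = 0 -> forall l i j, g l i j = 0.
Proof.
move=> hm [Sg Xg Yg] g0.
have s1 : forall i, (i <= 2 * m)%N -> g 0%N i (2 * m - i)%N = 0.
  elim=> [|i IH] hi; first by rewrite subn0.
  have := Yg i (2 * m - i.+1)%N; rewrite (_ : (2 * m - i.+1).+1 = 2 * m - i)%N; last lia.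
  rewrite IH ?mulr0 ?addr0; last lia.
  move=> /(_ _ _ _)/eqP; rewrite mulf_eq0 pnatr_eq0 => h.
  have /orP[/eqP|/eqP //] := h ltac:(lia) ltac:(lia) ltac:(lia). lia.
have s2 : forall i j, g 0%N i j = 0.
  move=> i j; apply/eqP; apply/negP => /negP hne.
  have [_ _ _ e] := Sg _ _ _ hne.
  have : g 0%N i j = 0 by rewrite (_ : j = 2 * m - i)%N ?s1 //; lia.
  by move/eqP; rewrite (negbTE hne).
elim=> [|l IH] i j; first exact: s2.
apply/eqP; apply/negP => /negP hne.
have [hl hi hj _] := Sg _ _ _ hne.
have := Xg l i j hl hi hj; rewrite !IH !mulr0 addr0 => /eqP.
by rewrite mulf_eq0 pnatr_eq0 /= (negbTE hne).
Qed.


Lemma fam_tt (F : numClosedFieldType) (r m n : nat) (T : 'I_n.+1 -> 'M[F]_(r.+1))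
  (hT : equivariant T) (hm : (2 * m <= r)%N) (hn : n = (2 * r - 4 * m)%N) :
  fam r m n (tt T).
Proof.
split.
- by move=> l i j; apply: supp.
- by move=> l i j hl hi hj; apply: eqX => //; apply: ltnW.
- move=> i j hi hj _; by rewrite -(eqY hT (leq0n n) hi hj).
Qed.

Definition ttr (F : numClosedFieldType) (r n : nat) (T : 'I_n.+1 -> 'M[F]_(r.+1))
  (l i j : nat) : F :=
  if [&& (l <= n)%N, (i <= r)%N & (j <= r)%N] then tt T (n - l) (r - i) (r - j) else 0.

Lemma fam_ttr (F : numClosedFieldType) (r m n : nat) (T : 'I_n.+1 -> 'M[F]_(r.+1))
  (hT : equivariant T) (hm : (2 * m <= r)%N) (hn : n = (2 * r - 4 * m)%N) :
  fam r m n (ttr T).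
Proof.
split.
- move=> l i j; rewrite /ttr; case: ifP => [/and3P[hl hi hj]|]; last by rewrite eqxx.
  move=> /(supp hT hm hn) [_ _ _ e]; split => //; lia.
- move=> l i j hl hi hj; rewrite /ttr hl hi hj.
  rewrite (leq_trans (leq_pred i) hi) (leq_trans (leq_pred j) hj) ltnW //=.
  have hL : (n - l = (n - l.+1).+1)%N by lia.
  have := eqY hT (leq_subr l n) (leq_subr i r) (leq_subr j r).
  rewrite hL -hL (_ : n - (n - l.+1) = l.+1)%N; last lia.
  rewrite (_ : r - (r - i) = i)%N; last lia.
  rewrite (_ : r - (r - j) = j)%N; last lia.
  move=> ->; congr (_ + _).
    by case: i hi => [|i] hi; rewrite ?mul0r // (_ : (r - i.+1).+1 = r - i)%N //=; lia.
  by case: j hj => [|j] hj; rewrite ?mul0r // (_ : (r - j.+1).+1 = r - j)%N //=; lia.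
- move=> i j hi hj hij; rewrite /ttr /= (_ : i.+1 <= r)%N; last lia.
  rewrite (_ : j.+1 <= r)%N; last lia.
  rewrite hi hj /=.
  have := eqX hT (leqnn n) (leq_subr i r) (leq_subr j r).
  rewrite tt_out ?ltnn // mulr0 (_ : (r - i).-1 = r - i.+1)%N; last lia.
  rewrite (_ : (r - j).-1 = r - j.+1)%N; last lia.
  by rewrite subn0 => <-.
Qed.


Definition revmx (F : numClosedFieldType) (r : nat) (M : 'M[F]_(r.+1)) : 'M[F]_(r.+1) :=
  \matrix_(i, j) M (rev_ord i) (rev_ord j).
Definition Pmx (F : numClosedFieldType) (r : nat) : 'M[F]_(r.+1) :=
  \matrix_(i, j) ((j == rev_ord i)%:R).

Lemma sum_pick (F : numClosedFieldType) (N : nat) (x : 'I_N) (f : 'I_N -> F) :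
  \sum_a (a == x)%:R * f a = f x.
Proof.
rewrite (bigD1 x) //= eqxx mul1r big1 ?addr0 // => a /negbTE ->; by rewrite mul0r.
Qed.

Lemma revmxE (F : numClosedFieldType) (r : nat) (M : 'M[F]_(r.+1)) :
  revmx M = Pmx F r *m M *m Pmx F r.
Proof.
apply/matrixP => i j; rewrite !mxE.
rewrite (eq_bigr (fun b => (b == rev_ord j)%:R * (Pmx F r *m M) i b)); last first.
  move=> b _; rewrite [Pmx F r b j]mxE mulrC; congr (_ * _); congr (_%:R).
  by rewrite -(inj_eq (@rev_ord_inj r.+1)) rev_ordK eq_sym.
rewrite sum_pick mxE.
rewrite (eq_bigr (fun a => (a == rev_ord i)%:R * M a (rev_ord j))); last by move=> a _; rewrite mxE.
by rewrite sum_pick.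
Qed.

Lemma revmxK (F : numClosedFieldType) (r : nat) (M : 'M[F]_(r.+1)) : revmx (revmx M) = M.
Proof. by apply/matrixP => i j; rewrite !mxE !rev_ordK. Qed.

Lemma rank_revmx (F : numClosedFieldType) (r : nat) (M : 'M[F]_(r.+1)) :
  \rank (revmx M) = \rank M.
Proof.
have H : forall N : 'M[F]_(r.+1), (\rank (revmx N) <= \rank N)%N.
  move=> N; rewrite revmxE; apply: leq_trans (mxrankM_maxl _ _) _; exact: mxrankM_maxr.
by apply/eqP; rewrite eqn_leq H /= -{1}(revmxK M) H.
Qed.


Lemma w0_shape (F : numClosedFieldType) (n : nat) (w0 : 'cV[F]_(n.+1))
  (hX : sl2X F n *m w0 = 0) (p : 'I_n.+1) : (p : nat) != 0%N -> w0 p 0 = 0.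
Proof.
case: p => [[|l] hl] //= _.
move/matrixP/(_ (inord l) 0): hX; rewrite !mxE.
rewrite (eq_bigr (fun p : 'I_n.+1 => (if (p:nat) == l.+1 then (p:nat)%:R else 0) *
   (fun k => w0 (inord k) 0) p)); last by move=> p _; rewrite inord_val mxE inordK // ltnS ltnW.
rewrite (@sA _ n l.+1 (fun p => p%:R) (fun k => w0 (inord k) 0)) -ltnS hl => /eqP.
rewrite mulf_eq0 pnatr_eq0 /= => /eqP.
by move=> h; rewrite -[RHS]h; congr (w0 _ 0); apply: val_inj; rewrite /= inordK.
Qed.

Lemma Yk (F : numClosedFieldType) (n : nat) (w0 : 'cV[F]_(n.+1))
  (hX : sl2X F n *m w0 = 0) (k : nat) (p : 'I_n.+1) :
  (sl2Y F n ^+ k *m w0) p 0 = if (p : nat) == k then (n ^_ k)%:R * w0 0 0 else 0.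
Proof.
elim: k p => [|k IH] p.
  rewrite expr0 mul1mx ffactn0 mul1r; case: eqP => hp; last by rewrite w0_shape //; apply/eqP.
  by congr (w0 _ 0); apply: val_inj.
rewrite exprS -mulmxA mxE.
rewrite (eq_bigr (fun a : 'I_n.+1 => (if (p:nat) == (a:nat).+1 then (n - a)%:R else 0) *
   (fun a => if a == k then (n ^_ k)%:R * w0 0 0 else 0) a)); last by move=> a _; rewrite IH mxE.
rewrite (@sB _ n p (fun a => (n - a)%:R) (fun a => if a == k then (n ^_ k)%:R * w0 0 0 else 0)).
case: p => [[|p] hp] //=.
have hp2 : (p <= n)%N by lia.
rewrite hp2 eqSS; case: eqP => [->|]; last by rewrite mulr0.
by rewrite ffactnSr natrM; ring.
Qed.

Lemma dqd (F : numClosedFieldType) (r : nat) (M : 'M[F]_(r.+1)) (i j : 'I_r.+1) :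
  ((delta_mx i (0 : 'I_1))^T *m M *m delta_mx j (0 : 'I_1)) 0 0 = M i j.
Proof. by rewrite trmx_delta -rowE -colE !mxE. Qed.

Lemma Tq (F : numClosedFieldType) (r n : nat) (T : 'I_n.+1 -> 'M[F]_(r.+1))
  (w0 : 'cV[F]_(n.+1)) (hX : sl2X F n *m w0 = 0)
  (q : 'I_n.+1 -> 'M[F]_(r.+1))
  (hf : forall u v : 'cV[F]_(r.+1),
      bilin T u v = \sum_(k < n.+1) (u^T *m q k *m v) 0 0 *: wvec w0 k) (l : 'I_n.+1) :
  T l = ((l`!)%:R^-1 * ((n ^_ l)%:R * w0 0 0)) *: q l.
Proof.
apply/matrixP => i j.
move/matrixP/(_ l 0): (hf (delta_mx i 0) (delta_mx j 0)).
rewrite bilin_dd summxE => ->.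
rewrite (bigD1 l) //= big1 ?addr0.
  by rewrite dqd [LHS]mxE /wvec mxE Yk // eqxx mxE mulrC.
move=> k hk; rewrite dqd [LHS]mxE /wvec mxE Yk // ifN ?mulr0 ?scaler0 //.
by apply: contra hk => /eqP h; apply/eqP; apply: val_inj.
Qed.


Lemma rank_bound (F : numClosedFieldType) (r m n : nat) (T : 'I_n.+1 -> 'M[F]_(r.+1))
  (hT : equivariant T) (hm : (2 * m <= r)%N) (hn : n = (2 * r - 4 * m)%N)
  (k : 'I_n.+1) : (2 * k <= n)%N -> (\rank (T k) <= 2 * m + k + 1)%N.
Proof.
move=> hk.
have -> : T k = pid_mx (2 * m + k + 1) *m T k.
  apply/matrixP => i j; rewrite mxE (bigD1 i) //= big1 ?addr0.
    rewrite mxE eqxx /=; case: (ltnP i (2 * m + k + 1)) => hi; first by rewrite mul1r.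
    rewrite mul0r -ttE; apply/eqP; apply/negP => /negP /(supp hT hm hn) [_ _ _ e].
    move: hi; lia.
  by move=> a ha; rewrite mxE (_ : (i == a :> nat) = false) ?mul0r //; apply/negbTE; rewrite eq_sym.
apply: leq_trans (mxrankM_maxl _ _) _.
by rewrite rank_pid_mx //; lia.
Qed.


Lemma rank_sym (F : numClosedFieldType) (r m n : nat) (T : 'I_n.+1 -> 'M[F]_(r.+1))
  (hT : equivariant T) (hm : (2 * m <= r)%N) (hn : n = (2 * r - 4 * m)%N)
  (k : 'I_n.+1) : \rank (T k) = \rank (T (rev_ord k)).
Proof.
set a := tt T 0 0 (2 * m); set a' := ttr T 0 0 (2 * m).
have famT := fam_tt hT hm hn; have famR := fam_ttr hT hm hn.
have G := fam_zero hm (fam_lin a' a famT famR) ltac:(by rewrite /= mulrC subrr).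
have hR : forall k : 'I_n.+1, revmx (T (rev_ord k)) = \matrix_(i, j) ttr T k i j.
  move=> l; apply/matrixP => i j; rewrite !mxE -ttE /ttr (leq_ord l) (leq_ord i) (leq_ord j) /=.
  by rewrite !subSS.
have rR : forall k : 'I_n.+1, \rank (T (rev_ord k)) = \rank (\matrix_(i, j) ttr T k i j :'M[F]_(r.+1)).
  by move=> l; rewrite -hR rank_revmx.
case: (eqVneq a 0) => ha.
  have Z := fam_zero hm famT ha.
  have Tz : forall l, T l = 0 by move=> l; apply/matrixP => i j; rewrite -ttE Z mxE.
  by rewrite !Tz.
have hRs : forall l : 'I_n.+1, (\matrix_(i, j) ttr T l i j : 'M[F]_(r.+1)) = (a' / a) *: T l.
  move=> l; apply/matrixP => i j; rewrite !mxE -ttE.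
  have := G l i j => /eqP; rewrite subr_eq0 => /eqP e.
  by rewrite mulrAC e mulrAC mulfV // mul1r.
case: (eqVneq a' 0) => ha'.
  have Z : forall l : 'I_n.+1, \rank (T (rev_ord l)) = 0%N.
    by move=> l; rewrite rR hRs ha' mul0r scale0r mxrank0.
  by rewrite -{1}(rev_ordK k) !Z.
rewrite rR hRs mxrank_scale_nz // mulf_neq0 // invr_neq0 //.
Qed.

Unset Implicit Arguments.

Theorem mainTheorem5 (F : numClosedFieldType) (r m n : nat)
  (hr : (2 <= r)%N) (hm : (2 * m <= r)%N) (hn : n = (2 * r - 4 * m)%N)
  (T : 'I_n.+1 -> 'M[F]_(r.+1)) (hT : equivariant T)
  (w0 : 'cV[F]_(n.+1)) (hw0 : w0 != 0) (hX : sl2X F n *m w0 = 0)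
  (q : 'I_n.+1 -> 'M[F]_(r.+1)) (hq : forall k, (q k)^T = q k)
  (hf : forall u v : 'cV[F]_(r.+1),
      bilin T u v = \sum_(k < n.+1) (u^T *m q k *m v) 0 0 *: wvec w0 k) :
  forall k : 'I_n.+1, (2 * k <= n)%N ->
    \rank (q k) = \rank (q (rev_ord k)) /\ (\rank (q k) <= 2 * m + k + 1)%N.
Proof.
have hc : w0 0 0 != 0.
  apply: contra hw0 => /eqP h; apply/eqP/matrixP => p z; rewrite (ord1 z) mxE.
  case: (eqVneq (p : nat) 0%N) => hp; last exact: w0_shape.
  by rewrite -h; congr (w0 _ 0); apply: val_inj.
have hq' : forall l, \rank (q l) = \rank (T l).
  move=> l; rewrite (Tq hX hf) mxrank_scale_nz //.
  rewrite mulf_neq0 // ?invr_neq0 ?mulf_neq0 // pnatr_eq0 -lt0n.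
    exact: fact_gt0.
  by rewrite ffact_gt0 leq_ord.
move=> k hk; rewrite !hq'; split; first exact: (rank_sym hT hm hn).
exact: (rank_bound hT hm hn).
Qed.
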